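(* Let $(X,C)$ be a separable convexity space and let $B$ be the family of its half-spaces. If the Radon number of $(X,C)$ is $r$, then the VC dimension of $B$ and the Helly number of $B$ are both less than $r$.
   Context: A convexity space is a pair $(X,C)$ with $C\subseteq 2^X$ such that $\emptyset, X\in C$ and $C$ is closed under arbitrary intersections. The convex hull $conv(Y)$ is the intersection of all $c\in C$ containing $Y$. A half-space is a $b\in C$ with $X\setminus b\in C$. $(X,C)$ is separable if for every $c\in C$ and $x\in X\setminus c$ there is a half-space $b$ with $c\subseteq b$, $x\notin b$. $C$ Radon-shatters $Y$ if for every partition $Y=Y_1\sqcup Y_2$, $conv(Y_1)\cap conv(Y_2)=\emptyset$; the Radon number is the minimum $r$ such that no set of size $r$ is Radon-shattered. The Helly number of a family $B$ is the minimum $h$ such that every finite $B'\subseteq B$ with $\bigcap B'=\emptyset$ contains a subfamily of at most $h$ sets with empty intersection. The VC dimension of $B\subseteq 2^X$ is the supremum of $v$ such that some $Y\subseteq X$ with $|Y|=v$ satisfies: for every $Z\subseteq Y$ there is $b\in B$ with $b\cap Y=Z$. *)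

(* Defs.v *)
From mathcomp Require Import all_boot all_order.
From mathcomp Require Import boolp classical_sets.
Set Implicit Arguments. Unset Strict Implicit. Unset Printing Implicit Defensive.
Local Open Scope classical_set_scope.

Definition convexity_space (X : Type) (C : set (set X)) : Prop :=
  C set0 /\ C setT /\
  (forall F : set (set X), F `<=` C -> C (\bigcap_(c in F) c)).

Definition conv (X : Type) (C : set (set X)) (Y : set X) : set X :=
  \bigcap_(c in [set c | C c /\ Y `<=` c]) c.

Definition half_space (X : Type) (C : set (set X)) (b : set X) : Prop :=
  C b /\ C (~` b).

Definition half_spaces (X : Type) (C : set (set X)) : set (set X) :=
  [set b | half_space C b].

Definition separable (X : Type) (C : set (set X)) : Prop :=
  forall (c : set X) (x : X), C c -> ~ c x ->
    exists b, half_space C b /\ c `<=` b /\ ~ b x.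

Definition has_size (X : Type) (Y : set X) (n : nat) : Prop :=
  exists f : 'I_n -> X, injective f /\ range f = Y.

Definition radon_shatters (X : Type) (C : set (set X)) (Y : set X) : Prop :=
  forall Y1 Y2 : set X, Y1 `|` Y2 = Y -> Y1 `&` Y2 = set0 ->
    conv C Y1 `&` conv C Y2 = set0.

Definition no_radon_shattered_of_size (X : Type) (C : set (set X)) (r : nat) :=
  forall Y : set X, has_size Y r -> ~ radon_shatters C Y.

Definition radon_number (X : Type) (C : set (set X)) (r : nat) : Prop :=
  no_radon_shattered_of_size C r /\
  (forall r', (r' < r)%N -> ~ no_radon_shattered_of_size C r').

Definition helly_prop (X : Type) (B : set (set X)) (h : nat) : Prop :=
  forall (n : nat) (b : 'I_n -> set X), (forall i, B (b i)) ->
    \bigcap_(i in [set: 'I_n]) b i = set0 ->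
    exists S : {set 'I_n}, (#|S| <= h)%N /\
      \bigcap_(i in [set i | i \in S]) b i = set0.

Definition helly_number (X : Type) (B : set (set X)) (h : nat) : Prop :=
  helly_prop B h /\ (forall h', (h' < h)%N -> ~ helly_prop B h').

Definition vc_shatters (X : Type) (B : set (set X)) (Y : set X) : Prop :=
  forall Z : set X, Z `<=` Y -> exists b, B b /\ b `&` Y = Z.

(* v is the VC dimension (the supremum, here a finite maximum) *)
Definition vc_dim (X : Type) (B : set (set X)) (v : nat) : Prop :=
  (exists Y : set X, has_size Y v /\ vc_shatters B Y) /\
  (forall (Y : set X) (m : nat), has_size Y m -> vc_shatters B Y -> (m <= v)%N).

(* Main.v *)
Require Import Defs.
From mathcomp Require Import all_boot all_order.
From mathcomp Require Import boolp classical_sets.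
Set Implicit Arguments. Unset Strict Implicit. Unset Printing Implicit Defensive.
Local Open Scope classical_set_scope.

Lemma conv_sub (X : Type) (C : set (set X)) (Y c : set X) :
  C c -> Y `<=` c -> conv C Y `<=` c.
Proof. by move=> Cc Yc x Hx; apply: Hx. Qed.

Lemma vc_sub (X : Type) (B : set (set X)) (Y Y' : set X) :
  vc_shatters B Y -> Y' `<=` Y -> vc_shatters B Y'.
Proof.
move=> HY sub Z ZY'.
have [b [Bb Hb]] := HY Z (subset_trans ZY' sub).
exists b; split => //; apply/seteqP; split => x.
  case=> bx Yx; have : (b `&` Y) x by split => //; apply: sub.
  by rewrite Hb.
  move=> Zx; split; last exact: ZY'.
  have : (b `&` Y) x by rewrite Hb.
  by case.
Qed.

Lemma vc_radon (X : Type) (C : set (set X)) (Y : set X) :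
  vc_shatters (half_spaces C) Y -> radon_shatters C Y.
Proof.
move=> HY Y1 Y2 HU HI.
have Y1Y : Y1 `<=` Y by rewrite -HU => x Hx; left.
have [b [[Cb Cnb] Hb]] := HY Y1 Y1Y.
have s1 : conv C Y1 `<=` b by apply: conv_sub => // x; rewrite -Hb => -[].
have s2 : conv C Y2 `<=` ~` b.
  apply: conv_sub => // x Hx bx.
  have : (Y1 `&` Y2) x.
    split => //; rewrite -Hb; split => //; rewrite -HU; by right.
  by rewrite HI.
by apply/seteqP; split => // x [/s1 h1 /s2 h2].
Qed.

Lemma vc_bound (X : Type) (C : set (set X)) (r : nat) (Y : set X) (m : nat) :
  no_radon_shattered_of_size C r -> has_size Y m ->
  vc_shatters (half_spaces C) Y -> (m < r)%N.
Proof.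
move=> NR [f [finj fY]] HY; rewrite ltnNge; apply/negP => rm.
pose g := fun k : 'I_r => f (widen_ord rm k).
apply: (NR (range g)).
  exists g; split => //.
  by move=> k1 k2 /finj /(congr1 val) /= e; apply: val_inj.
apply: vc_radon; apply: (vc_sub HY).
by rewrite -fY => x [k _ <-]; exists (widen_ord rm k).
Qed.

Lemma capP (X : Type) (n : nat) (b : 'I_n -> set X) (S : pred 'I_n) :
  (\bigcap_(i in [set i | S i]) b i = set0) <-> (forall z, ~ forall i, S i -> b i z).
Proof.
split.
  move=> H z Hz; have : (\bigcap_(i in [set i | S i]) b i) z by move=> i /= Hi; apply: Hz.
  by rewrite H.
move=> H; apply/seteqP; split => // z Hz; apply: (H z) => i Hi; exact: Hz.
Qed.

Lemma helly_aux (X : Type) (C : set (set X)) (r : nat) (n : nat) (b : 'I_n -> set X) :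
  no_radon_shattered_of_size C r -> (forall i, C (b i)) ->
  forall k (S0 : {set 'I_n}), (#|S0| <= k)%N ->
  (forall z, ~ forall i, i \in S0 -> b i z) ->
  exists S : {set 'I_n}, (#|S| <= r.-1)%N /\ (forall z, ~ forall i, i \in S -> b i z).
Proof.
move=> NR Cb; elim=> [|k IH] S0 Hk H0.
  by exists S0; split => //; rewrite leqn0 in Hk; rewrite (eqP Hk).
case: (leqP #|S0| r.-1) => Hs; first by exists S0.
have rS : (r <= #|S0|)%N by apply: leq_trans (leqSpred r) Hs.
case: (pselect (exists j, j \in S0 /\ forall z, ~ forall i, i \in S0 :\ j -> b i z)).
  case=> j [jS Hj]; apply: (IH (S0 :\ j)) => //.
  by rewrite -ltnS (leq_trans _ Hk) // (cardsD1 j S0) jS.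
move=> Hno.
have Hx : forall j, exists x, j \in S0 -> forall i, i \in S0 :\ j -> b i x.
  move=> j; case: (pselect (j \in S0)) => jS.
    apply: contrapT => Hn; apply: Hno; exists j; split => // z Hz.
    by apply: Hn; exists z.
  have [i0 i0S] : exists i0, i0 \in S0.
    by apply/set0Pn; rewrite -card_gt0 (leq_trans _ Hs).
  apply: contrapT => Hn; apply: Hno; exists i0; split => // z Hz.
  by apply: Hn; exists z.
have [x Px] := choice Hx.
pose e := fun k : 'I_r => (enum_val (widen_ord rS k) : 'I_n).
pose g := fun k => x (e k).
have eS : forall q, e q \in S0 by move=> q; exact: enum_valP.
have einj : injective e by move=> k1 k2 /enum_val_inj /(congr1 val) /= h; apply: val_inj.
have xinj : forall i j, i \in S0 -> j \in S0 -> x i = x j -> i = j.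
  move=> i j iS jS xij; apply: contrapT => ne; apply: (H0 (x i)) => l lS.
  case: (eqVneq l i) => [->|li].
    rewrite xij; apply: Px => //; rewrite !inE iS andbT; apply/eqP => e'.
    by apply: ne; rewrite e'.
  by apply: Px => //; rewrite !inE li lS.
have ginj : injective g.
  by move=> k1 k2 /xinj h; apply: einj; apply: h.
exfalso; apply: (NR (range g)); first by exists g.
move=> Y1 Y2 HU HI; apply: contrapT => Hne.
have [p [p1 p2]] : exists p, (conv C Y1 `&` conv C Y2) p.
  apply: contrapT => Hn; apply: Hne; apply/seteqP; split => // q Hq.
  by apply: Hn; exists q.
apply: (H0 p) => j jS.
have key : forall Z, Z `<=` range g -> ~ Z (x j) -> Z `<=` b j.
  move=> Z ZR nZ y Zy; have [q _ yq] := ZR y Zy.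
  rewrite -yq; apply: (Px (e q) (eS q)); rewrite !inE jS andbT.
  apply/eqP => ej; apply: nZ; rewrite ej; rewrite -yq in Zy; exact: Zy.
have R1 : Y1 `<=` range g by rewrite -HU => y Hy; left.
have R2 : Y2 `<=` range g by rewrite -HU => y Hy; right.
case: (pselect (Y1 (x j))) => h1.
  apply: (conv_sub (Cb j) (key _ R2 _)) p2 => h2.
  by have : (Y1 `&` Y2) (x j) by []; rewrite HI.
exact: (conv_sub (Cb j) (key _ R1 h1)) p1.
Qed.

Theorem lemma1 (X : Type) (C : set (set X)) (r : nat) :
  convexity_space C -> separable C -> radon_number C r ->
  (exists v : nat, vc_dim (half_spaces C) v /\ (v < r)%N) /\
  (exists h : nat, helly_number (half_spaces C) h /\ (h < r)%N).
Proof.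
move=> [C0 [CT _]] _ [NR _].
have f0 : 'I_0 -> X by case=> m; rewrite ltn0.
have hs0 : has_size (@set0 X) 0.
  exists f0; split; first by case.
  by apply/seteqP; split => x //; case=> -[].
have vc0 : vc_shatters (half_spaces C) (@set0 X).
  move=> Z Z0; exists set0; split; first by split; rewrite ?setC0.
  by rewrite setI0; apply/esym/seteqP; split.
have r0 : (0 < r)%N by apply: (vc_bound NR hs0 vc0).
split.
  pose P := fun m => `[< exists Y, has_size Y m /\ vc_shatters (half_spaces C) Y >].
  have exP : exists m, P m by exists 0; apply/asboolP; exists set0.
  have ubP : forall m, P m -> (m <= r.-1)%N.
    move=> m /asboolP [Y [HY VY]]; rewrite -ltnS prednK //.
    exact: (vc_bound NR HY VY).
  case: (ex_maxnP exP ubP) => v /asboolP Pv Hv.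
  exists v; split; last by have [Y [HY VY]] := Pv; exact: (vc_bound NR HY VY).
  split => // Y m HY VY; apply: Hv; apply/asboolP; exists Y; split => //.
have HP : helly_prop (half_spaces C) r.-1.
  move=> n b Bb Hcap.
  have H0 : forall z, ~ forall i, i \in [set: 'I_n]%SET -> b i z.
    move=> z Hz; have : (\bigcap_(i in [set: 'I_n]) b i) z.
      move=> i _; apply: Hz.
      by [].
    by rewrite Hcap.
  have [S [HS HSb]] := helly_aux (k := #|[set: 'I_n]%SET|) (S0 := [set: 'I_n]) NR (fun i => (Bb i).1) (leqnn _) H0.
  by exists S; split => //; apply/(@capP _ _ b (fun i => i \in S)).
pose P := fun h => `[< helly_prop (half_spaces C) h >].
have exP : exists h, P h by exists r.-1; apply/asboolP.
case: (ex_minnP exP) => h /asboolP Ph Hh.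
exists h; split.
  split => // h' lt H; have := Hh h' (asboolT H); by rewrite leqNgt lt.
by apply: leq_ltn_trans (Hh _ (asboolT HP)) _; rewrite prednK.
Qed.
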